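(* Let $X$ be a $\mathbb{Z}^n$-periodic discrete metric space with orbit representatives $x_1,\dots,x_N$, let $p\in[1,\infty]$, and let $A$ be a band operator on $l^p(X)$. Then $UAU^{-1}$ is a band operator on $l^p(\mathbb{Z}^n,\mathbb{C}^N)$, i.e. it can be written as $\sum_{|\alpha|\le m} a_\alpha V_\alpha$ for some $m$ and some $a_\alpha\in l^\infty(\mathbb{Z}^n,\mathbb{C}^{N\times N})$.
   Context: A discrete metric space is a countable set $X$ with a metric $\rho$ such that every ball $\{x:\rho(x,x_0)\le r\}$ is finite. It is $\mathbb{Z}^n$-periodic if $\mathbb{Z}^n$ acts on $X$, $(\alpha,x)\mapsto\alpha\cdot x$, with $0\cdot x=x$, $(\alpha+\beta)\cdot x=\alpha\cdot(\beta\cdot x)$, $\rho(\alpha\cdot x,\alpha\cdot y)=\rho(x,y)$, the action is free ($\alpha\cdot x=x$ implies $\alpha=0$), and there are finitely many orbits; $x_1,\dots,x_N$ are fixed representatives of the $N$ orbits. $U:l^p(X)\to l^p(\mathbb{Z}^n,\mathbb{C}^N)$ is $(Uf)(\alpha)=(f(\alpha\cdot x_1),\dots,f(\alpha\cdot x_N))$, an isometric isomorphism. On $l^p(\mathbb{Z}^n,\mathbb{C}^N)$, $(V_\alpha u)(x)=u(x-\alpha)$ and $a\in l^\infty(\mathbb{Z}^n,\mathbb{C}^{N\times N})$ acts by $(au)(x)=a(x)u(x)$. A linear operator $A$ on $l^p(X)$ has generating function $k_A:X\times X\to\mathbb{C}$ if $(Au)(x)=\sum_{y\in X}k_A(x,y)u(y)$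 for all finitely supported $u$. $A$ is a band operator on $l^p(X)$ if it has a bounded generating function $k_A$ and there is $R>0$ with $k_A(x,y)=0$ whenever $\rho(x,y)>R$. *)

(* Defs.v *)
From HB Require Import structures.
From mathcomp Require Import all_boot all_order all_algebra.
From mathcomp Require Import complex.
From mathcomp Require Import reals exp Rstruct.

Set Implicit Arguments.
Unset Strict Implicit.
Unset Printing Implicit Defensive.

Import Order.TTheory GRing.Theory Num.Theory.
Local Open Scope ring_scope.

Definition RR : realType := Rdefinitions.R.
Definition CC := RR[i].

Definition cabs (z : CC) : RR := ComplexField.Normc.normc z.

Inductive exponent := Pfin of RR | Pinf.
Definition valid_exponent (p : exponent) : Prop :=
  match p with Pfin q => 1 <= q | Pinf => True end.

Definition in_lp (T : eqType) (p : exponent) (f : T -> CC) : Prop :=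
  match p with
  | Pfin q => exists M : RR, forall s : seq T, uniq s ->
                \sum_(x <- s) powR (cabs (f x)) q <= M
  | Pinf => exists M : RR, forall x, cabs (f x) <= M
  end.

Definition finsupp (T : eqType) (V : zmodType) (f : T -> V) : Prop :=
  exists s : seq T, forall x, x \notin s -> f x = 0.

(** A Z^n-periodic discrete metric space, together with fixed orbit
    representatives x_1, ..., x_N (here orep : 'I_N -> X). *)
Record periodic_dms (n : nat) := PeriodicDMS {
  pt :> countType;
  rho : pt -> pt -> RR;
  rho_eq0 : forall x y, rho x y = 0 <-> x = y;
  rho_sym : forall x y, rho x y = rho y x;
  rho_tri : forall x y z, rho x z <= rho x y + rho y z;
  balls_finite : forall (x0 : pt) (r : RR),
      exists s : seq pt, forall x, rho x x0 <= r -> x \in s;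
  act : 'rV[int]_n -> pt -> pt;
  act0 : forall x, act 0 x = x;
  actD : forall a b x, act (a + b) x = act a (act b x);
  act_iso : forall a x y, rho (act a x) (act a y) = rho x y;
  act_free : forall a x, act a x = x -> a = 0;
  norb : nat;
  orep : 'I_norb -> pt;
  orep_cover : forall x : pt,
      exists ai : 'rV[int]_n * 'I_norb, act ai.1 (orep ai.2) == x;
  orep_distinct : forall a i j, act a (orep i) = orep j -> i = j
}.

Section Ops.
Variables (n : nat) (X : periodic_dms n).

Definition lin_op_lp (p : exponent) (A : (X -> CC) -> (X -> CC)) : Prop :=
  (forall f, in_lp p f -> in_lp p (A f)) /\
  (forall (c : CC) f g, in_lp p f -> in_lp p g ->
     A (fun x => c * f x + g x) = (fun x => c * A f x + A g x)).

(** k is a generating function of A: (Au)(x) = sum_y k(x,y) u(y) for every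
    finitely supported u (the sum is written over any duplicate-free list s
    containing the support of u). *)
Definition generating_function (A : (X -> CC) -> (X -> CC))
    (k : X -> X -> CC) : Prop :=
  forall (u : X -> CC) (s : seq X), uniq s -> (forall y, y \notin s -> u y = 0) ->
    forall x, A u x = \sum_(y <- s) k x y * u y.

Definition band_op (p : exponent) (A : (X -> CC) -> (X -> CC)) : Prop :=
  lin_op_lp p A /\
  exists k : X -> X -> CC,
    generating_function A k /\
    (exists M : RR, forall x y, cabs (k x y) <= M) /\
    (exists R : RR, 0 < R /\ forall x y, R < rho x y -> k x y = 0).

Definition Uop (f : X -> CC) : 'rV[int]_n -> 'cV[CC]_(norb X) :=
  fun a => \col_i f (act a (orep i)).

(** U^{-1}: (U^{-1} v)(alpha . x_i) = v(alpha)_i. *)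
Definition Uinv (v : 'rV[int]_n -> 'cV[CC]_(norb X)) : X -> CC :=
  fun x => let ai := xchoose (orep_cover x) in v ai.1 ai.2 ord0.

End Ops.

Arguments Uop {n} X f.
Arguments Uinv {n} X v.
Arguments band_op {n X} p A.

Definition Vsh (n N : nat) (al : 'rV[int]_n) (v : 'rV[int]_n -> 'cV[CC]_N) :
  'rV[int]_n -> 'cV[CC]_N := fun x => v (x - al).

Definition supnorm (n : nat) (al : 'rV[int]_n) : nat := \max_(i < n) `|al ord0 i|%N.

(** l^oo(Z^n, C^{N x N}) (bounded entries; all norms on C^{NxN} are equivalent). *)
Definition linf_mx (n N : nat) (a : 'rV[int]_n -> 'M[CC]_N) : Prop :=
  exists M : RR, forall x i j, cabs (a x i j) <= M.

(* Main.v *)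
Require Import Defs.
From HB Require Import structures.
From mathcomp Require Import all_boot all_order all_algebra.
From mathcomp Require Import complex.
From mathcomp Require Import reals exp Rstruct.
From mathcomp Require Import zify.
From mathcomp Require Import boolp.

Import GRing.Theory Num.Theory.
Local Open Scope ring_scope.

Section Aux.
Variables (n : nat) (X : periodic_dms n).

Lemma act_dec a b i j :
  @act _ X a (@orep _ X i) = @act _ X b (@orep _ X j) -> a = b /\ i = j.
Proof.
move=> H.
have H1 : @act _ X (- b + a) (@orep _ X i) = @orep _ X j.
  by rewrite actD H -actD addNr act0.
have eij := orep_distinct H1; subst j; split => //.
by move: (act_free H1) => /eqP; rewrite addrC subr_eq0 => /eqP.
Qed.

Lemma dec_act a i : xchoose (@orep_cover _ X (@act _ X a (@orep _ X i))) = (a, i).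
Proof.
have := xchooseP (@orep_cover _ X (@act _ X a (@orep _ X i))).
case: (xchoose _) => b j /= /eqP /act_dec [-> ->] //.
Qed.

Lemma Uinv_act v a i : Uinv X v (@act _ X a (@orep _ X i)) = v a i ord0.
Proof. by rewrite /Uinv /= dec_act. Qed.

Lemma rho_shift x b z w :
  @rho _ X (@act _ X x z) (@act _ X b w) = @rho _ X (@act _ X (x - b) z) w.
Proof.
rewrite -(@act_iso _ X (- b)) -!actD addNr act0 addrC //.
Qed.

End Aux.

Lemma box (n m : nat) : exists S : seq 'rV[int]_n,
  uniq S /\ forall al, al \in S <-> (supnorm al <= m)%N.
Proof.
pose g (w : 'rV['I_(m + m).+1]_n) : 'rV[int]_n :=
  \row_k (Posz (w ord0 k) - Posz m).
exists (undup [seq g w | w <- enum 'rV['I_(m + m).+1]_n]).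
split; first exact: undup_uniq.
move=> al; rewrite mem_undup; split.
  case/mapP => w _ ->; apply/bigmax_leqP => k _; rewrite mxE.
  have := ltn_ord (w ord0 k). move: (nat_of_ord (w ord0 k)) => q. lia.
move=> Hs.
have Hk : forall k, (absz (al ord0 k) <= m)%N.
  by move=> k; move/bigmax_leqP: Hs; apply.
apply/mapP; exists (\row_k (inord (absz (al ord0 k + Posz m)%R) : 'I_(m+m).+1)).
  by rewrite mem_enum.
apply/matrixP => i k; rewrite (ord1 i) !mxE inordK; have := Hk k; move: (al ord0 k) => q; lia.
Qed.

Theorem proposition3p1 (n : nat) (X : periodic_dms n) (p : exponent)
    (A : (X -> CC) -> (X -> CC)) :
  valid_exponent p -> band_op p A ->
  exists (m : nat) (S : seq 'rV[int]_n)
         (a : 'rV[int]_n -> 'rV[int]_n -> 'M[CC]_(norb X)),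
    [/\ uniq S,
        (forall al, al \in S <-> (supnorm al <= m)%N),
        (forall al, linf_mx (a al)) &
        (forall v : 'rV[int]_n -> 'cV[CC]_(norb X), finsupp v ->
           Uop X (A (Uinv X v)) =
           (fun x => \sum_(al <- S) a al x *m Vsh al v x))].
Proof.
move=> _ [_ [k [Hgen [[M HM] [R [R0 HR]]]]]].
have fb : forall j : 'I_(norb X),
    {s : seq X | forall x, @rho _ X x (@orep _ X j) <= R -> x \in s}.
  by move=> j; apply: boolp.constructive_indefinite_description; exact: balls_finite.
pose dec (z : X) := xchoose (@orep_cover _ X z).
pose m := \max_(j : 'I_(norb X)) \max_(z <- sval (fb j)) supnorm (dec z).1.
have Hm : forall i j c, @rho _ X (@act _ X c (@orep _ X i)) (@orep _ X j) <= R ->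
    (supnorm c <= m)%N.
  move=> i j c H; have Hz := svalP (fb j) _ H.
  apply: (leq_trans _ (leq_bigmax j)).
  have := @leq_bigmax_seq _ (sval (fb j)) xpredT (fun z => supnorm (dec z).1) _ Hz isT.
  by rewrite /dec dec_act.
have [S [US HS]] := box n m.
exists m, S, (fun al x => \matrix_(i, j)
   k (@act _ X x (@orep _ X i)) (@act _ X (x - al) (@orep _ X j))).
split => //.
  by move=> al; exists M => x i j; rewrite mxE.
move=> v [sv Hsv].
apply: boolp.funext => x.
apply/matrixP => i z; rewrite (ord1 z) {z}.
set u := Uinv X v.
pose T := [seq @act _ X (x - al) (@orep _ X j) | al <- S, j <- enum 'I_(norb X)].
pose sY := undup ([seq @act _ X b (@orep _ X j) | b <- sv, j <- enum 'I_(norb X)] ++ T).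
have Hsupp : forall y, y \notin sY -> u y = 0.
  move=> y; rewrite mem_undup mem_cat negb_or => /andP [Hy _].
  rewrite /u /Uinv /=.
  have := xchooseP (@orep_cover _ X y).
  case: (xchoose _) => b j /= /eqP Hy'.
  rewrite -Hy' in Hy.
  case: (boolP (b \in sv)) => Hb.
    by case/negP: Hy; apply: allpairs_f => //; rewrite mem_enum.
  by rewrite Hsv // mxE.
rewrite /Uop mxE (Hgen u sY (undup_uniq _) Hsupp) summxE.
pose G y := k (@act _ X x (@orep _ X i)) y * u y.
apply: (@eq_trans _ _ (\sum_(y <- T) G y)); last first.
  rewrite big_allpairs_dep; apply: eq_bigr => al _.
  rewrite mxE big_enum /=; apply: eq_bigr => j _.
  rewrite mxE /Vsh /G; congr (_ * _); exact: Uinv_act.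
rewrite -/(G _) (bigID (fun y => y \in T)) /=.
rewrite [X in _ + X]big1 ?addr0.
  rewrite -big_filter; apply: perm_big; apply: uniq_perm.
  - by rewrite filter_uniq // undup_uniq.
  - apply: allpairs_uniq => //; first exact: enum_uniq.
    move=> [a1 j1] [a2 j2] _ _ /= /act_dec [H1 ->].
    by have -> : a1 = a2 by rewrite -(subKr x a1) H1 subKr.
  move=> y; rewrite mem_filter andb_idr // => yT.
  by rewrite mem_undup mem_cat yT orbT.
move=> y yT; rewrite /G.
have := xchooseP (@orep_cover _ X y).
case: (xchoose _) => b j /= /eqP Hy; subst y.
rewrite HR ?mul0r //.
case: (Order.TotalTheory.ltP R (@rho _ X (@act _ X x (@orep _ X i)) (@act _ X b (@orep _ X j)))) => // Hle.
exfalso; move: yT; apply/negP/negPn.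
rewrite rho_shift in Hle.
have Hs := Hm _ _ _ Hle.
have -> : b = x - (x - b) by rewrite subKr.
by apply: allpairs_f; [apply/HS | rewrite mem_enum].
Qed.
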